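(* Let $G$ be a connected (claw, bull)-free graph with $\ell(G)\le 3$ and $\alpha(G)\ge 3$. Then: (1) $\mathrm{diam}(G)\ge 4$; and (2) $G$ is an expansion of a path.
   Context: A claw is a graph isomorphic to $K_{1,3}$; a bull is the graph obtained from a triangle by adding two pendant edges at two different vertices. A graph is (claw, bull)-free if it has no induced claw and no induced bull. $\ell(G)$ is the length of a longest induced cycle in $G$; $\ell(G)\le 3$ means $G$ has no induced cycle of length at least $4$. $\alpha(G)$ is the independence number and $\mathrm{diam}(G)$ the diameter. An expansion of a graph $F$ with vertex set $\{v_1,\dots,v_n\}$ is any graph obtained from $F$ by replacing each vertex $v_i$ by a nonempty clique $K^{[i]}$, the cliques being pairwise vertex-disjoint, and adding all edges between $V(K^{[i]})$ and $V(K^{[j]})$ whenever $v_iv_j\in E(F)$ (and no other edges between different cliques). *)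

(* Defs.v *)
From mathcomp Require Import all_boot.
Set Implicit Arguments. Unset Strict Implicit. Unset Printing Implicit Defensive.

Section Graphs.
Variable T : finType.
Variable adj : rel T.

Definition simple_graph := symmetric adj /\ irreflexive adj.

Definition connected_graph := forall x y : T, connect adj x y.

Definition induced_sub (H : finType) (h : rel H) :=
  exists f : H -> T, injective f /\ forall u v : H, adj (f u) (f v) = h u v.

Definition stable (S : {set T}) :=
  [forall x in S, forall y in S, ~~ adj x y].

Definition alpha := \max_(S : {set T} | stable S) #|S|.

Definition ball (k : nat) (x : T) : {set T} :=
  iter k (fun S => S :|: [set y | [exists z in S, adj z y]]) [set x].

(* distance: least k with y in ball k x (equals #|T| if unreachable) *)
Definition dist (x y : T) : nat := find (fun k => y \in ball k x) (iota 0 #|T|).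

Definition diam := \max_(x : T) \max_(y : T) dist x y.

(* G is an expansion of F (F given by h : rel F): vertex v_i of F is
   replaced by the nonempty clique f^-1(v_i). *)
Definition expansion_of (F : finType) (h : rel F) :=
  exists f : T -> F, (forall v : F, exists x : T, f x = v) /\
    forall x y : T, adj x y = (x != y) && ((f x == f y) || h (f x) (f y)).

End Graphs.

Definition claw_rel : rel 'I_4 :=
  fun u v => (u != v) && ((nat_of_ord u == 0) || (nat_of_ord v == 0)).

Definition bull_edge (a b : nat) : bool :=
  [|| (a == 0) && (b == 1), (a == 0) && (b == 2), (a == 1) && (b == 2),
      (a == 0) && (b == 3) | (a == 1) && (b == 4)].
Definition bull_rel : rel 'I_5 :=
  fun u v => bull_edge u v || bull_edge v u.

Definition cycle_rel (k : nat) : rel 'I_k :=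
  fun u v => (u.+1 %% k == v) || (v.+1 %% k == u).

Definition path_rel (n : nat) : rel 'I_n :=
  fun u v => (u.+1 == v :> nat) || (v.+1 == u :> nat).

Definition claw_free (T : finType) (adj : rel T) := ~ @induced_sub T adj _ claw_rel.
Definition bull_free (T : finType) (adj : rel T) := ~ @induced_sub T adj _ bull_rel.

Definition longest_induced_cycle_le3 (T : finType) (adj : rel T) :=
  forall k, 4 <= k -> ~ @induced_sub T adj _ (@cycle_rel k).

(* Main.v *)
Require Import Defs.
From mathcomp Require Import all_boot.
From mathcomp Require Import zify.
Set Implicit Arguments. Unset Strict Implicit. Unset Printing Implicit Defensive.

Section G.
Variable T : finType.
Variable adj : rel T.
Hypothesis adj_sym : symmetric adj.
Hypothesis adj_irr : irreflexive adj.
Hypothesis cfree : claw_free adj.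
Hypothesis bfree : bull_free adj.

Ltac slia := repeat match goal with
  | H : is_true (~~ _) |- _ => clear H
  | H : is_true (adj _ _) |- _ => clear H
  | H : forall _, _ |- _ => clear H
  end; lia.

Ltac contra_adj :=
  match goal with
  | H : is_true (adj ?x ?x) |- _ => by rewrite adj_irr in H
  | H : is_true (adj ?x ?y), H' : is_true (~~ adj ?x ?y) |- _ => by rewrite H in H'
  | H : is_true (adj ?x ?y), H' : is_true (~~ adj ?y ?x) |- _ => by rewrite adj_sym H in H'
  | H : is_true (?x != ?x) |- _ => by rewrite eqxx in H
  end.

Ltac close_adj := first [ by rewrite adj_irr | done | by rewrite adj_sym
  | by apply/negbTE | by apply/negbTE; rewrite adj_sym ].

Lemma noclaw c a b e : adj c a -> adj c b -> adj c e ->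
  ~~ adj a b -> ~~ adj a e -> ~~ adj b e -> a != b -> a != e -> b != e -> False.
Proof.
move=> ca cb ce ab ae be nab nae nbe; apply: cfree.
exists (fun i : 'I_4 => nth c [:: c; a; b; e] i); split.
  move=> [i Hi] [j Hj]; apply: contra_eq => /= nij.
  case: i Hi nij => [|[|[|[|i]]]] Hi //; case: j Hj => [|[|[|[|j]]]] Hj //= _;
  apply/eqP => E; subst; contra_adj.
move=> [i Hi] [j Hj]; rewrite /claw_rel /=.
case: i Hi => [|[|[|[|i]]]] Hi //; case: j Hj => [|[|[|[|j]]]] Hj //=; close_adj.
Qed.

Lemma nobull t0 t1 t2 p3 p4 : adj t0 t1 -> adj t0 t2 -> adj t1 t2 -> adj t0 p3 -> adj t1 p4 ->
  ~~ adj t1 p3 -> ~~ adj t2 p3 -> ~~ adj t0 p4 -> ~~ adj t2 p4 -> ~~ adj p3 p4 -> False.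
Proof.
move=> h01 h02 h12 h03 h14 n13 n23 n04 n24 n34; apply: bfree.
exists (fun i : 'I_5 => nth t0 [:: t0; t1; t2; p3; p4] i); split.
  move=> [i Hi] [j Hj]; apply: contra_eq => /= nij.
  case: i Hi nij => [|[|[|[|[|i]]]]] Hi //; case: j Hj => [|[|[|[|[|j]]]]] Hj //= _;
  apply/eqP => E; subst; contra_adj.
move=> [i Hi] [j Hj]; rewrite /bull_rel /bull_edge /=.
case: i Hi => [|[|[|[|[|i]]]]] Hi //; case: j Hj => [|[|[|[|[|j]]]]] Hj //=; close_adj.
Qed.

Hypothesis conn : connected_graph adj.

Lemma ballS k x : ball adj k.+1 x = ball adj k x :|: [set y | [exists z in ball adj k x, adj z y]].
Proof. by []. Qed.

Lemma ball0 x : ball adj 0 x = [set x].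
Proof. by []. Qed.

Lemma ball_rcons x p : path adj x p -> last x p \in ball adj (size p) x.
Proof.
elim/last_ind: p => [|p z IH]; first by rewrite [ball _ _ _]/= set11.
rewrite rcons_path => /andP[/IH Hp Hz]; rewrite last_rcons size_rcons ballS.
apply/setUP; right; rewrite inE; apply/existsP; exists (last x p); by rewrite Hp.
Qed.

Lemma reach x y : exists2 k, k < #|T| & y \in ball adj k x.
Proof.
have /connectP[p Hp ->] := conn x y.
case: (shortenP Hp) => p' Hp' Hu _.
exists (size p'); last exact: ball_rcons.
have := max_card (mem (x :: p')); rewrite (card_uniqP Hu) /=; lia.
Qed.

Lemma dist_has x y : has (fun k => y \in ball adj k x) (iota 0 #|T|).
Proof.
case: (reach x y) => k Hk Hb; apply/hasP; exists k => //; rewrite mem_iota; lia.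
Qed.

Lemma dist_lt x y : dist adj x y < #|T|.
Proof. by have := dist_has x y; rewrite has_find size_iota. Qed.

Lemma dist_in x y : y \in ball adj (dist adj x y) x.
Proof.
have := nth_find 0 (dist_has x y); rewrite nth_iota ?add0n //; exact: dist_lt.
Qed.

Lemma dist_min x y k : k < dist adj x y -> y \notin ball adj k x.
Proof.
move=> Hk; have := before_find 0 Hk; rewrite nth_iota ?add0n => [->//|].
have := dist_lt x y; lia.
Qed.

Lemma dist_le x y k : y \in ball adj k x -> dist adj x y <= k.
Proof. move=> H; rewrite leqNgt; apply/negP => /dist_min; by rewrite H. Qed.

Lemma dist0 x y : (dist adj x y == 0) = (y == x).
Proof.
apply/eqP/eqP => [H|->].
  by have := dist_in x y; rewrite H ball0 inE => /eqP.
by apply/eqP; rewrite -leqn0; apply: dist_le; rewrite ball0 set11.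
Qed.

Lemma dist_adj x y z : adj y z -> dist adj x z <= (dist adj x y).+1.
Proof.
move=> Hyz; apply: dist_le; rewrite ballS; apply/setUP; right; rewrite inE.
apply/existsP; exists y; by rewrite dist_in.
Qed.

Lemma dist_adj2 x y z : adj y z ->
  dist adj x z <= (dist adj x y).+1 /\ dist adj x y <= (dist adj x z).+1.
Proof. move=> H; split; apply: dist_adj => //; by rewrite adj_sym. Qed.

Lemma dist_parent x y k : dist adj x y = k.+1 -> exists2 z, adj z y & dist adj x z = k.
Proof.
move=> Hd; have := dist_in x y; rewrite Hd ballS => /setUP[H|].
  by move: (@dist_min x y k); rewrite Hd ltnSn H => /(_ isT).
rewrite inE => /existsP[z /andP[Hz Hzy]]; exists z => //.
have := dist_le Hz; have := dist_adj x Hzy; lia.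
Qed.

Definition restr (P : pred T) : rel T := fun a b => [&& P a, P b & adj a b].

Lemma restr_sym P : symmetric (restr P).
Proof. move=> a b; rewrite /restr adj_sym; by case: (P a); case: (P b). Qed.

Lemma restr_mono (P P' : pred T) x y : (forall z, P z -> P' z) ->
  connect (restr P) x y -> connect (restr P') x y.
Proof.
move=> H; apply: connect_sub => a b /and3P[Pa Pb ab]; apply: connect1.
by rewrite /restr (H _ Pa) (H _ Pb) ab.
Qed.

Lemma down_connect r x :
  connect (restr (fun w => (dist adj r w < dist adj r x) || (w == x))) x r.
Proof.
suff: forall n x, dist adj r x = n ->
    connect (restr (fun w => (dist adj r w < n) || (w == x))) x r.
  by move/(_ _ x erefl).
elim=> [|n IH] {}x Hx.
  by move/eqP: Hx; rewrite dist0 => /eqP->; exact: connect0.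
have [z Hzx Hz] := dist_parent Hx.
apply: (connect_trans (y:=z)).
  by apply: connect1; rewrite /restr /= eqxx orbT Hz ltnSn /= adj_sym.
apply: restr_mono (IH z Hz) => w /orP[H|/eqP->]; apply/orP; left; lia.
Qed.

Lemma layer_connect r a b : dist adj r a = dist adj r b ->
  connect (restr (fun w => [|| dist adj r w < dist adj r a, w == a | w == b])) a b.
Proof.
move=> Hab; apply: (connect_trans (y:=r)).
  apply: restr_mono (down_connect r a) => w /orP[->|->] //; by rewrite orbT.
rewrite (sym_connect_sym (@restr_sym _)).
apply: restr_mono (down_connect r b) => w /orP[H|->]; last by rewrite !orbT.
by rewrite Hab H.
Qed.

Hypothesis chordal : longest_induced_cycle_le3 adj.

Lemma mk_cycle (g : nat -> T) N : 4 <= N ->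
  (forall i j, i < N -> j < N -> g i = g j -> i = j) ->
  (forall i j, i < N -> j < N -> adj (g i) (g j) = (i.+1 %% N == j) || (j.+1 %% N == i)) ->
  False.
Proof.
move=> HN Hinj Hadj; apply: (chordal HN); exists (fun i : 'I_N => g i); split.
  move=> [i Hi] [j Hj] /= E; apply/val_inj => /=; exact: Hinj.
move=> [i Hi] [j Hj]; rewrite /cycle_rel /=; exact: Hadj.
Qed.

Lemma modS' a N : a < N -> a.+1 %% N = if a.+1 == N then 0 else a.+1.
Proof. move=> H; case: eqP => E; first by rewrite E modnn. rewrite modn_small //; lia. Qed.

Lemma cycE a b N : a < N -> b < N -> ((a.+1 %% N == b) || (b.+1 %% N == a)) =
  [|| a.+1 == b, b.+1 == a, (a.+1 == N) && (b == 0) | (b.+1 == N) && (a == 0)].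
Proof.
move=> Ha Hb; rewrite (modS' Ha) (modS' Hb).
case: (a.+1 == N) / eqP; case: (b.+1 == N) / eqP; lia.
Qed.

Lemma nth_splice (x0 : T) s a b k : a <= size s -> a <= b ->
  nth x0 (take a s ++ drop b s) k = if k < a then nth x0 s k else nth x0 s (k - a + b).
Proof.
move=> Ha Hab; rewrite nth_cat size_takel //; case: ifP => H; first by rewrite nth_take.
rewrite nth_drop; congr nth; lia.
Qed.

Lemma cycle_close (P : pred T) (Q : seq T) (x0 : T) m :
  size Q = m.+1 -> 2 <= m -> uniq Q ->
  (forall i j, i <= m -> j <= m ->
     adj (nth x0 Q i) (nth x0 Q j) = (i.+1 == j) || (j.+1 == i)) ->
  (forall z, P z -> z != nth x0 Q 0 -> z != nth x0 Q m ->
     forall i, 0 < i < m -> (z != nth x0 Q i) && ~~ adj z (nth x0 Q i)) ->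
  connect (restr P) (nth x0 Q m) (nth x0 Q 0) -> False.
Proof.
move=> HsQ Hm HuQ HQ HP /connectP[p Hp Hl].
have Hq0m : nth x0 Q m != nth x0 Q 0.
  by rewrite nth_uniq ?HsQ //; lia.
have Hq0m' : ~~ adj (nth x0 Q m) (nth x0 Q 0) by rewrite HQ //; lia.
suff: forall n s, size s <= n -> 0 < size s -> nth x0 s 0 = nth x0 Q m ->
    nth x0 s (size s).-1 = nth x0 Q 0 ->
    (forall k, k.+1 < size s -> restr P (nth x0 s k) (nth x0 s k.+1)) -> False.
  move/(_ (size (nth x0 Q m :: p)) (nth x0 Q m :: p) (leqnn _) isT erefl); apply.
    by rewrite nth_last /= -Hl.
  move=> k Hk; exact: (pathP x0 Hp) k Hk.
elim=> [|n IH] s Hsn Hs0 Hh Hl' Hw; first lia.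
have HL2 : 1 < size s.
  rewrite ltnNge; apply/negP => H1.
  have E : (size s).-1 = 0 by lia.
  by move: Hq0m; rewrite -Hh -Hl' E eqxx.
have HPs : forall k, k < size s -> P (nth x0 s k).
  move=> k Hk; case: (ltnP k.+1 (size s)) => Hk'.
    by case/and3P: (Hw k Hk').
  have E : k = (k.-1).+1 by lia.
  have := Hw k.-1; rewrite -E => /(_ Hk) /and3P[]//.
have splice : forall a b, 0 < a -> a < b -> b < size s ->
    restr P (nth x0 s a.-1) (nth x0 s b) -> False.
  move=> a b Ha Hab Hb Hj.
  have Has : a <= size s by lia.
  have Hab' : a <= b by lia.
  have Hsz : size (take a s ++ drop b s) = a + (size s - b).
    by rewrite size_cat size_takel // size_drop.
  apply: (IH (take a s ++ drop b s)).
  - rewrite Hsz; lia.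
  - rewrite Hsz; lia.
  - by rewrite nth_splice // Ha.
  - rewrite nth_splice // Hsz ifN; last lia.
    rewrite -Hl'; congr nth; lia.
  - move=> k; rewrite Hsz => Hk; rewrite !nth_splice //.
    case: (ltnP k.+1 a) => H1.
      rewrite ifT; last lia. apply: Hw; lia.
    case: (ltnP k a) => H2.
      have Ek : k = a.-1 by lia.
      have -> : k.+1 - a + b = b by lia.
      by rewrite Ek.
    have -> : k.+1 - a + b = (k - a + b).+1 by lia.
    apply: Hw; lia.
case: (boolP [exists i : 'I_(size s), exists j : 'I_(size s), (i.+1 < j) &&
    ((nth x0 s i == nth x0 s j) || adj (nth x0 s i) (nth x0 s j))]).
  case/existsP => [[i Hi]] /existsP [[j Hj]] /= /andP [Hij /orP[/eqP Heq|Hadj]].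
    case: (posnP i) => Hi0.
      case: (ltnP j.+1 (size s)) => Hj1.
        apply: (splice 1 j.+1) => //; first lia.
        by rewrite /= -Hi0 Heq; apply: Hw.
      have Ej : j = (size s).-1 by lia.
      by move: Hq0m; rewrite -Hh -Hl' -Ej -Heq Hi0 eqxx.
    apply: (splice i j) => //; first lia.
    have := Hw i.-1; have -> : (i.-1).+1 = i by lia.
    rewrite -Heq; apply; lia.
  apply: (splice i.+1 j) => //.
  by rewrite /= /restr HPs // HPs // Hadj.
rewrite negb_exists => /forallP Hmin.
have Hmin' : forall i j, i.+1 < j -> j < size s ->
    (nth x0 s i != nth x0 s j) && ~~ adj (nth x0 s i) (nth x0 s j).
  move=> i j Hij Hj; have Hi : i < size s by lia.
  move: (Hmin (Ordinal Hi)); rewrite negb_exists => /forallP /(_ (Ordinal Hj)) /=.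
  by rewrite Hij /= negb_or.
have sadj : forall i j, i <= j -> j < size s ->
    adj (nth x0 s i) (nth x0 s j) = (i.+1 == j).
  move=> i j Hij Hj; case: (ltngtP i.+1 j) => H.
  - by case/andP: (Hmin' i j H Hj) => _ /negbTE ->.
  - have -> : j = i by lia. by rewrite adj_irr; lia.
  - rewrite -H; have Hi : i.+1 < size s by lia. by case/and3P: (Hw i Hi).
have sneq : forall i j, i < j -> j < size s -> nth x0 s i != nth x0 s j.
  move=> i j Hij Hj; case: (ltnP i.+1 j) => H.
    by case/andP: (Hmin' i j H Hj).
  apply/eqP => E; have := sadj i j (ltnW Hij) Hj; rewrite E adj_irr; lia.
set n' := (size s).-1.
have Hn' : 2 <= n'.
  rewrite /n'; case: (ltnP 2 (size s)) => H; first lia.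
  have E : size s = 2 by lia.
  move: Hq0m'; rewrite -Hh -Hl' E sadj //= E //.
have Hs : size s = n'.+1 by rewrite /n'; lia.
have Hint : forall k, 0 < k < n' -> forall i, 0 < i < m ->
    (nth x0 s k != nth x0 Q i) && ~~ adj (nth x0 s k) (nth x0 Q i).
  move=> k Hk i Hi; apply: HP => //.
  - apply: HPs; lia.
  - rewrite -Hl' -/n'; apply: sneq; lia.
  - rewrite -Hh eq_sym; apply: sneq; lia.
pose g t := if t <= m then nth x0 Q t else nth x0 s (t - m).
have key : forall t1 t2, t1 <= t2 -> t2 < m + n' ->
    (g t1 = g t2 -> t1 = t2) /\ adj (g t1) (g t2) =
    [|| t1.+1 == t2, t2.+1 == t1, (t1.+1 == m + n') && (t2 == 0)
      | (t2.+1 == m + n') && (t1 == 0)].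
  move=> t1 t2 H12 H2N; rewrite /g.
  case: (leqP t2 m) => H2m.
    have H1m : t1 <= m by lia.
    rewrite H1m /=; split.
      move=> E; apply/eqP; rewrite -(nth_uniq x0 _ _ HuQ) ?HsQ ?E //; lia.
    rewrite HQ //; lia.
  rewrite /=.
  case: (leqP t1 m) => H1m.
    case: (posnP t1) => Ht10.
      rewrite Ht10 -Hl' -/n'; split.
        move=> E; have := sneq (t2 - m) n'; rewrite E eqxx; lia.
      rewrite adj_sym sadj; lia.
    case: (ltnP t1 m) => Ht1m.
      have := Hint (t2 - m) _ t1; rewrite adj_sym => /(_ _ _)/andP[].
        lia. lia.
      move=> Hne /negbTE ->; split; last lia.
      move=> E; by rewrite E eqxx in Hne.
    have Et1 : t1 = m by lia.
    rewrite Et1 -Hh; split.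
      move=> E; have := sneq 0 (t2 - m); rewrite E eqxx; lia.
    rewrite sadj; lia.
  rewrite /=; split.
    move=> E; case: (ltnP (t1 - m) (t2 - m)) => H.
      have := sneq (t1 - m) (t2 - m); rewrite E eqxx; lia.
    lia.
  rewrite sadj; lia.
apply: (mk_cycle (g := g) (N := m + n')); first lia.
  move=> i j Hi Hj E; case: (leqP i j) => H; first exact: (key i j H Hj).1 E.
  by symmetry; apply: (key j i (ltnW H) Hi).1; rewrite E.
move=> i j Hi Hj; rewrite cycE //; case: (leqP i j) => H; first exact: (key i j H Hj).2.
rewrite adj_sym (key j i (ltnW H) Hi).2; lia.
Qed.

Lemma no_P3_cycle (P : pred T) a w b : adj a w -> adj w b -> ~~ adj a b -> a != b ->
  (forall z, P z -> z != a -> z != b -> (z != w) && ~~ adj z w) ->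
  connect (restr P) b a -> False.
Proof.
move=> aw wb ab nab HP Hc.
have nw1 : a != w by apply/eqP => E; rewrite E adj_irr in aw.
have nw2 : w != b by apply/eqP => E; rewrite E adj_irr in wb.
apply: (@cycle_close P [:: a; w; b] a 2) => //.
- by rewrite /= !inE negb_or nw1 nab nw2.
- move=> i j Hi Hj.
  case: i Hi => [|[|[|i]]] Hi //; case: j Hj => [|[|[|j]]] Hj //=;
    first [ by rewrite adj_irr | done | by rewrite adj_sym | by apply/negbTE
          | by apply/negbTE; rewrite adj_sym ].
- move=> z Pz za zb i /andP[Hi1 Hi2]; have -> : i = 1 by lia. exact: HP.
Qed.

Lemma no_P4_cycle (P : pred T) a w1 w2 b : adj a w1 -> adj w1 w2 -> adj w2 b ->
  ~~ adj a w2 -> ~~ adj w1 b -> ~~ adj a b ->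
  (forall z, P z -> z != a -> z != b ->
     [&& z != w1, z != w2, ~~ adj z w1 & ~~ adj z w2]) ->
  connect (restr P) b a -> False.
Proof.
move=> h1 h2 h3 n1 n2 n3 HP Hc.
have d1 : a != w1 by apply/eqP => E; rewrite E adj_irr in h1.
have d2 : w1 != w2 by apply/eqP => E; rewrite E adj_irr in h2.
have d3 : w2 != b by apply/eqP => E; rewrite E adj_irr in h3.
have d4 : a != w2 by apply/eqP => E; rewrite E h3 in n3.
have d5 : w1 != b by apply/eqP => E; rewrite -E h1 in n3.
have d6 : a != b by apply/eqP => E; rewrite E adj_sym h3 in n1.
apply: (@cycle_close P [:: a; w1; w2; b] a 3) => //.
- by rewrite /= !inE !negb_or d1 d4 d6 d2 d5 d3.
- move=> i j Hi Hj.
  case: i Hi => [|[|[|[|i]]]] Hi //; case: j Hj => [|[|[|[|j]]]] Hj //=;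
    first [ by rewrite adj_irr | done | by rewrite adj_sym | by apply/negbTE
          | by apply/negbTE; rewrite adj_sym ].
- move=> z Pz za zb i /andP[Hi1 Hi2]; case/and4P: (HP z Pz za zb) => e1 e2 e3 e4.
  case: i Hi1 Hi2 => [|[|[|i]]] //= _ _; by rewrite ?e1 ?e2 ?e3 ?e4.
Qed.

Lemma adj_dist1 r y : dist adj r y = 1 -> adj r y.
Proof.
move=> H; have [z Hz Hz0] := dist_parent H.
by move/eqP: Hz0; rewrite dist0 => /eqP <-.
Qed.

Lemma dist1_adj r y : adj r y -> dist adj r y = 1.
Proof.
move=> H; have := dist_adj r H; have := dist0 r y; have := dist0 r r.
rewrite eqxx; case: eqP => // -> _.
have : y != r by apply/eqP => E; rewrite E adj_irr in H.
move/negbTE => -> /eqP; lia.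
Qed.

Lemma fact_A r w k a b : dist adj r w = k.+1 -> adj w a -> adj w b ->
  dist adj r a = k -> dist adj r b = k -> a != b -> adj a b.
Proof.
move=> Hw wa wb Ha Hb nab; apply/negPn/negP => nadj.
apply: (@no_P3_cycle (fun z => [|| dist adj r z < dist adj r b, z == b | z == a]) a w b) => //.
- by rewrite adj_sym.
- move=> z /or3P[H|->|->] //; rewrite ?Ha ?Hb => _ _.
  apply/andP; split; first by apply/eqP => E; rewrite E in H; lia.
  by apply/negP => /(dist_adj2 r) [? ?]; lia.
- by apply: layer_connect; rewrite Ha Hb.
Qed.

Lemma stable3 : 3 <= alpha adj ->
  exists x y z, [/\ x != y, x != z, y != z & [&& ~~ adj x y, ~~ adj x z & ~~ adj y z]].
Proof.
move=> Ha.
case: (boolP [exists S : {set T}, stable adj S && (2 < #|S|)]); last first.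
  rewrite negb_exists => /forallP HS.
  suff : alpha adj <= 2 by lia.
  apply/bigmax_leqP => S HsS; move: (HS S); rewrite HsS /=; lia.
case/existsP => S /andP[/forallP HS HcS].
have Hst : forall x y, x \in S -> y \in S -> ~~ adj x y.
  by move=> x y Hx Hy; move: (HS x); rewrite Hx /= => /forallP /(_ y); rewrite Hy.
have [x Hx] : exists x, x \in S by apply/card_gt0P; lia.
have H1 : 1 < #|S :\ x| by move: HcS; rewrite (cardsD1 x) Hx; lia.
have [y Hy] : exists y, y \in S :\ x by apply/card_gt0P; lia.
have H2 : 0 < #|S :\ x :\ y| by move: H1; rewrite (cardsD1 y) Hy; lia.
have [z Hz] : exists z, z \in S :\ x :\ y by apply/card_gt0P; lia.
move: Hy Hz; rewrite !inE => /andP[yx yS] /and3P[zy zx zS].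
exists x, y, z; split; try by rewrite eq_sym.
by rewrite !Hst.
Qed.

Lemma ecc2 (u : T) : 3 <= alpha adj -> exists y, 2 <= dist adj u y.
Proof.
move=> /stable3 [x [y [z [nxy nxz nyz /and3P[axy axz ayz]]]]].
case: (boolP [exists w, 2 <= dist adj u w]) => [/existsP[w Hw]|]; first by exists w.
rewrite negb_exists => /forallP Hall; exfalso.
have near : forall w, w != u -> adj u w.
  move=> w wu; apply: adj_dist1; move: (Hall w) (dist0 u w); rewrite (negbTE wu); lia.
case: (eqVneq x u) => [Ex|xu].
  by move: axy; rewrite Ex near // -Ex eq_sym.
case: (eqVneq y u) => [Ey|yu].
  by move: axy; rewrite Ey adj_sym near.
case: (eqVneq z u) => [Ez|zu].
  by move: axz; rewrite Ez adj_sym near.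
apply: (@noclaw u x y z); rewrite ?near //.
Qed.

Lemma near_adj r a b : adj a b -> dist adj r a <= (dist adj r b).+1 /\ dist adj r b <= (dist adj r a).+1.
Proof. move=> H; have := @dist_adj2 r a b H; lia. Qed.

Lemma Bclique u D : 2 <= D -> (forall y, dist adj u y <= D) ->
  forall w, dist adj u w = D -> forall a b, adj w a -> adj w b ->
    dist adj u a = D -> dist adj u b = D -> a != b -> adj a b.
Proof.
move=> HD Hmax w Hw a b wa wb Ha Hb nab; apply/negPn/negP => nadj.
have [x xw Hx] := dist_parent (k := D.-1) (x := u) (y := w) (ltac:(slia)).
have [w' w'x Hw'] := dist_parent (k := D.-2) (x := u) (y := x) (ltac:(slia)).
have f1 : ~~ adj w' a by apply/negP => /(near_adj u); slia.
have f2 : ~~ adj w' b by apply/negP => /(near_adj u); slia.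
have f3 : ~~ adj w' w by apply/negP => /(near_adj u); slia.
have g1 : w' != a by apply/eqP => E; rewrite E in Hw'; slia.
have g2 : w' != b by apply/eqP => E; rewrite E in Hw'; slia.
have g3 : x != a by apply/eqP => E; rewrite E in Hx; slia.
have g4 : x != b by apply/eqP => E; rewrite E in Hx; slia.
case: (boolP (adj x a)) => xa; case: (boolP (adj x b)) => xb.
- apply: (@noclaw x w' a b) => //; by rewrite adj_sym.
- apply: (@nobull x w a w' b) => //; first [done | by rewrite adj_sym].
- apply: (@nobull x w b w' a) => //; first [done | by rewrite adj_sym].
- apply: (@noclaw w x a b) => //; first [done | by rewrite adj_sym].
Qed.

Lemma neq_dist r x y : dist adj r x <> dist adj r y -> x != y.
Proof. by move=> H; apply/eqP => E; apply: H; rewrite E. Qed.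

Lemma mixed_sub u D : 2 <= D -> (forall y, dist adj u y <= D) ->
  forall v, dist adj u v = D -> forall x y, adj v x -> adj v y ->
  dist adj u x = D.-1 -> dist adj u y = D -> ~~ adj x y ->
  forall z, adj y z -> z != v -> adj v z.
Proof.
move=> HD Hmax v Hv x y vx vy Hx Hy nxy z yz zv.
have Hz : dist adj u z = D \/ dist adj u z = D.-1.
  have := near_adj u yz; have := Hmax z; slia.
case: Hz => Hz.
  apply: (@Bclique u D HD Hmax y Hy v z) => //; first by rewrite adj_sym.
  by rewrite eq_sym.
apply/negPn/negP => nvz.
have nxy' : x != y by apply: (neq_dist (r:=u)); rewrite Hx Hy; slia.
case: (boolP (adj x z)) => xz.
  apply: (@no_P3_cycle (fun t => [|| t == x, t == z | t == y]) x v y) => //.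
  - by rewrite adj_sym.
  - move=> t /or3P[->|/eqP->|->] // _ _.
    by rewrite zv /= adj_sym.
  - apply: (connect_trans (y := z)); apply: connect1;
      by rewrite /restr /= !eqxx ?orbT // adj_sym.
apply: (@no_P4_cycle (fun t => [|| dist adj u t < dist adj u z, t == z | t == x]) x v y z) => //.
- by rewrite adj_sym.
- move=> t /or3P[Ht|->|->] // _ _.
  have e1 : t != v by apply: (neq_dist (r:=u)); slia.
  have e2 : t != y by apply: (neq_dist (r:=u)); slia.
  rewrite e1 e2 /=; apply/andP; split; apply/negP => /(near_adj u); slia.
- by apply: layer_connect; rewrite Hz Hx.
Qed.

Lemma simplicial_exists (u : T) : 3 <= alpha adj ->
  exists v, forall a b, adj v a -> adj v b -> a != b -> adj a b.
Proof.
move=> Hal; have [y0 Hy0] := ecc2 u Hal.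
have [v0 _ Hv0] := @arg_maxnP T u xpredT (dist adj u) isT.
move: Hv0; set D := dist adj u v0 => Hv0.
have HD : 2 <= D by have := Hv0 y0 isT; slia.
have Hmax : forall y, dist adj u y <= D by move=> y; exact: Hv0.
clear Hv0.
pose Nc y := [set z | (z == y) || adj y z].
have [v /eqP Hv Hmin] := @arg_minnP T v0 (fun y => dist adj u y == D) (fun y => #|Nc y|) (eqxx _).
have Dl : forall a, adj v a -> dist adj u a = D \/ dist adj u a = D.-1.
  move=> a va; have := near_adj u va; have := Hmax a; slia.
have mixed : forall x y, adj v x -> adj v y -> dist adj u x = D.-1 -> dist adj u y = D ->
    ~~ adj x y -> False.
  move=> x y vx vy Hx Hy nxy.
  have sub : Nc y \subset Nc v.
    apply/subsetP => z; rewrite !inE => /orP[/eqP->|yz]; first by rewrite vy orbT.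
    case: (eqVneq z v) => [->|zv] //=.
    exact: (mixed_sub HD Hmax Hv vx vy Hx Hy nxy yz zv).
  have xNc : x \in Nc v by rewrite inE vx orbT.
  have xNy : x \notin Nc y.
    rewrite inE negb_or adj_sym nxy andbT.
    by apply: (neq_dist (r:=u)); rewrite Hx Hy; slia.
  have : Nc y \proper Nc v.
    rewrite properE sub /=; apply/negP => /subsetP /(_ x xNc); by rewrite (negbTE xNy).
  move/proper_card; have := Hmin y; rewrite Hy eqxx => /(_ isT); slia.
exists v => a b va vb nab; apply/negPn/negP => nadj.
case: (Dl a va) => Ha; case: (Dl b vb) => Hb.
- by move: nadj; rewrite (@Bclique u D HD Hmax v Hv a b).
- by apply: (mixed b a) => //; rewrite adj_sym.
- exact: (mixed a b).
- move: nadj; rewrite (@fact_A u v D.-1 a b) //; slia.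
Qed.

Lemma far_nadj r x y : (dist adj r x).+1 < dist adj r y \/ (dist adj r y).+1 < dist adj r x ->
  ~~ adj x y.
Proof. move=> H; apply/negP => /(near_adj r); lia. Qed.

Section Layers.
Variable v : T.
Hypothesis Hsimp : forall a b, adj v a -> adj v b -> a != b -> adj a b.
Local Notation d := (dist adj v).

Definition clique_layer k := forall a b, d a = k -> d b = k -> a != b -> adj a b.

Lemma lemC i : 1 <= i -> clique_layer i -> clique_layer i.-1 ->
  forall a a', d a = i -> d a' = i -> a != a' ->
  exists2 w, d w = i.-1 & adj w a && adj w a'.
Proof.
move=> Hi Ci Ci1 a a' Ha Ha' naa.
have [q qa Hq] := dist_parent (k := i.-1) (x := v) (y := a) (ltac:(slia)).
have [q' qa' Hq'] := dist_parent (k := i.-1) (x := v) (y := a') (ltac:(slia)).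
case: (boolP (adj q a')) => qa'2; first by exists q; rewrite // qa qa'2.
case: (boolP (adj q' a)) => q'a; first by exists q'; rewrite // q'a qa'.
exfalso.
have nqq : q != q' by apply/eqP => E; rewrite E qa' in qa'2.
have Hqq : adj q q' by apply: Ci1.
have Haa : adj a a' by apply: Ci.
apply: (@no_P3_cycle (fun t => [|| t == q, t == q' | t == a']) q a a') => //.
- by apply: (neq_dist (r:=v)); rewrite Hq Ha'; slia.
- move=> t /or3P[->|/eqP->|->] // _ _.
  rewrite q'a andbT; apply: (neq_dist (r:=v)); rewrite Hq' Ha; slia.
- apply: (connect_trans (y := q')); apply: connect1;
    by rewrite /restr /= !eqxx ?orbT //= adj_sym.
Qed.

Lemma clique0 : clique_layer 0.
Proof.
move=> a b /eqP Ha /eqP Hb; rewrite dist0 in Ha; rewrite dist0 in Hb.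
by rewrite (eqP Ha) (eqP Hb) eqxx.
Qed.

Lemma clique1 : clique_layer 1.
Proof. move=> a b /adj_dist1 Ha /adj_dist1 Hb; exact: Hsimp. Qed.

Lemma all_cliques i : clique_layer i.
Proof.
suff: clique_layer i /\ clique_layer i.+1 by case.
elim: i => [|i [Ci Ci1]]; first by split; [exact: clique0 | exact: clique1].
split=> // b c Hb Hc nbc; apply/negPn/negP => nadj.
have [a ab Ha] := dist_parent (k := i.+1) (x := v) (y := b) Hb.
have [a' a'c Ha'] := dist_parent (k := i.+1) (x := v) (y := c) Hc.
have [w wa Hw] := dist_parent (k := i) (x := v) (y := a) Ha.
have [w' w'a' Hw'] := dist_parent (k := i) (x := v) (y := a') Ha'.
have f1 : ~~ adj w b by apply: (far_nadj (r:=v)); rewrite Hw Hb; slia.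
have f2 : ~~ adj w c by apply: (far_nadj (r:=v)); rewrite Hw Hc; slia.
have f3 : ~~ adj w' b by apply: (far_nadj (r:=v)); rewrite Hw' Hb; slia.
have f4 : ~~ adj w' c by apply: (far_nadj (r:=v)); rewrite Hw' Hc; slia.
have g1 : w != b by apply: (neq_dist (r:=v)); rewrite Hw Hb; slia.
have g2 : w != c by apply: (neq_dist (r:=v)); rewrite Hw Hc; slia.
have g3 : w' != b by apply: (neq_dist (r:=v)); rewrite Hw' Hb; slia.
have g4 : w' != c by apply: (neq_dist (r:=v)); rewrite Hw' Hc; slia.
case: (boolP (adj a c)) => ac.
  by apply: (@noclaw a w b c); rewrite // adj_sym.
case: (boolP (adj a' b)) => a'b.
  by apply: (@noclaw a' w' b c); rewrite // adj_sym.
have naa : a != a' by apply/eqP => E; rewrite -E ab in a'b.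
have Haa : adj a a' by apply: Ci1.
have [u Hu /andP[ua ua']] := @lemC i.+1 (ltac:(slia)) Ci1 Ci a a' Ha Ha' naa.
have f5 : ~~ adj u b by apply: (far_nadj (r:=v)); rewrite Hu Hb; slia.
have f6 : ~~ adj u c by apply: (far_nadj (r:=v)); rewrite Hu Hc; slia.
apply: (@nobull a a' u b c) => //; by rewrite adj_sym.
Qed.

Lemma T4 i a b : 2 <= i -> d a = i -> d b = i.+1 -> adj a b.
Proof.
move=> Hi Ha Hb; apply/negPn/negP => nab.
have [a' a'b Ha'] := dist_parent (k := i) (x := v) (y := b) Hb.
have naa : a != a' by apply/eqP => E; rewrite E a'b in nab.
have Haa : adj a a' by exact: (@all_cliques i a a' Ha Ha' naa).
have [w Hw /andP[wa wa']] := @lemC i (ltac:(slia)) (@all_cliques i) (@all_cliques i.-1) a a' Ha Ha' naa.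
have [u' u'w Hu'] := dist_parent (k := i.-2) (x := v) (y := w) (ltac:(slia)).
have f1 : ~~ adj a' u' by apply: (far_nadj (r:=v)); rewrite Ha' Hu'; slia.
have f2 : ~~ adj a u' by apply: (far_nadj (r:=v)); rewrite Ha Hu'; slia.
have f3 : ~~ adj w b by apply: (far_nadj (r:=v)); rewrite Hw Hb; slia.
have f4 : ~~ adj u' b by apply: (far_nadj (r:=v)); rewrite Hu' Hb; slia.
apply: (@nobull w a' a u' b) => //; by rewrite adj_sym.
Qed.

Definition twin x := [forall z, ((z == x) || adj x z) == ((z == v) || adj v z)].

Lemma twinP x : twin x -> forall z, ((z == x) || adj x z) = ((z == v) || adj v z).
Proof. by move/forallP => H z; apply/eqP. Qed.

Lemma twin_v : twin v.
Proof. by apply/forallP. Qed.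

Lemma d_vv : d v = 0.
Proof. by apply/eqP; rewrite dist0. Qed.

Lemma adj_v_d y : adj v y = (d y == 1).
Proof. by apply/idP/eqP => [/dist1_adj|/adj_dist1]. Qed.

Lemma twin_d x : twin x -> d x <= 1.
Proof.
move/twinP/(_ x); rewrite eqxx /= => /esym /orP[/eqP->|]; first by rewrite d_vv.
by rewrite adj_v_d => /eqP->.
Qed.

Lemma layer_exists s k : k <= d s -> exists y, d y = k.
Proof.
suff: forall m s, d s = m -> k <= m -> exists y, d y = k by move/(_ _ s erefl).
elim=> [|m IH] {}s Hs Hk; first by exists s; rewrite Hs; slia.
case: (eqVneq k m.+1) => [->|nk]; first by exists s.
have [z _ Hz] := dist_parent Hs; apply: (IH z Hz); lia.
Qed.

Lemma far4 : 3 <= alpha adj -> exists s, d s = 4.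
Proof.
move=> Hal; suff [s Hs] : exists s, 4 <= d s by apply: (layer_exists Hs).
case: (boolP [exists s, 4 <= d s]) => [/existsP[s Hs]|]; first by exists s.
rewrite negb_exists => /forallP Hall; exfalso.
have [x [y [z [nxy nxz nyz /and3P[axy axz ayz]]]]] := stable3 Hal.
have pf : forall p q, p != q -> ~~ adj p q ->
    [/\ d p <> d q, d p + d q <> 1, d p + d q <> 5 & d p <= 3].
  move=> p q npq apq.
  have Hp3 : d p <= 3 by move: (Hall p); rewrite ltnNge negbK.
  have Hq3 : d q <= 3 by move: (Hall q); rewrite ltnNge negbK.
  have n1 : ~ (d p = 0 /\ d q = 1).
    case=> H0 H1; move/eqP: H0; rewrite dist0 => /eqP Ep.
    by move: apq; rewrite Ep adj_v_d H1.
  have n2 : ~ (d q = 0 /\ d p = 1).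
    case=> H0 H1; move/eqP: H0; rewrite dist0 => /eqP Ep.
    by move: apq; rewrite Ep adj_sym adj_v_d H1.
  have n3 : ~ (d p = 2 /\ d q = 3).
    by case=> H2 H3; move: apq; rewrite (@T4 2 p q).
  have n4 : ~ (d q = 2 /\ d p = 3).
    by case=> H2 H3; move: apq; rewrite adj_sym (@T4 2 q p).
  have n5 : d p <> d q by move=> E; move: apq; rewrite (@all_cliques (d p) p q).
  clear -Hp3 Hq3 n1 n2 n3 n4 n5; split; lia.
case: (pf _ _ nxy axy) => a1 a2 a3 a4; case: (pf _ _ nxz axz) => b1 b2 b3 b4.
case: (pf _ _ nyz ayz) => c1 c2 c3 c4.
case: (pf z y (ltac:(by rewrite eq_sym)) (ltac:(by rewrite adj_sym))) => f1 f2 f3 f4.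
clear -a1 a2 a3 a4 b1 b2 b3 c1 c2 c3 c4 f4. move: a1 a2 a3 a4 b1 b2 b3 c1 c2 c3 c4 f4; move: (dist adj v x) (dist adj v y) (dist adj v z) => X Y Z. lia.
Qed.

Lemma T2 a b : 3 <= alpha adj -> d a = 1 -> ~~ twin a -> d b = 2 -> adj a b.
Proof.
move=> Hal Ha nta Hb; apply/negPn/negP => nab.
move: nta; rewrite negb_forall => /existsP [c Hc].
have va : adj v a by rewrite adj_v_d Ha.
case: (boolP (adj v c)) => vc.
  move: Hc; rewrite vc orbT; case: (eqVneq c a) => //= ca.
  rewrite (@all_cliques 1 a c) //; first by apply/eqP; rewrite -adj_v_d.
  by rewrite eq_sym.
have cv : c != v by apply/eqP => E; rewrite E eqxx /= (adj_sym a v) va orbT in Hc.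
move: Hc; rewrite (negbTE cv) (negbTE vc) /=.
case: (eqVneq c a) => [E|ca] /=; first by rewrite E va in vc.
move=> ac; have {}ac : adj a c by move: ac; case: (adj a c).
have Hc : d c = 2.
  have := near_adj v ac; rewrite Ha; have := dist0 v c; rewrite (negbTE cv).
  move: vc; rewrite adj_v_d; slia.
have nbc : b != c by apply/eqP => E; rewrite E ac in nab.
have bc : adj b c by apply: (@all_cliques 2 b c).
have [s Hs] := far4 Hal.
have [t ts Ht] := dist_parent (k := 3) (x := v) (y := s) Hs.
have bt : adj b t by apply: (@T4 2 b t).
have ct : adj c t by apply: (@T4 2 c t).
have f1 : ~~ adj t a by apply: (far_nadj (r:=v)); rewrite Ht Ha; slia.
have f2 : ~~ adj c s by apply: (far_nadj (r:=v)); rewrite Hc Hs; slia.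
have f3 : ~~ adj b s by apply: (far_nadj (r:=v)); rewrite Hb Hs; slia.
have f4 : ~~ adj a s by apply: (far_nadj (r:=v)); rewrite Ha Hs; slia.
apply: (@nobull c t b a s) => //; by rewrite adj_sym.
Qed.

Lemma adj_next x y : 3 <= alpha adj -> ~~ twin x -> d y = (d x).+1 -> adj x y.
Proof.
move=> Hal ntx Hy.
case: (posnP (d x)) => Hx0.
  by move/eqP: Hx0; rewrite dist0 => /eqP E; rewrite E twin_v in ntx.
case: (eqVneq (d x) 1) => [Hx1|Hx1].
  by apply: T2; rewrite // Hy Hx1.
apply: (@T4 (d x)) => //. by move: Hx0 Hx1; case: (d x) => [|[|n]].
Qed.

Lemma dpos y : ~~ twin y -> 0 < d y.
Proof.
move=> ty; rewrite lt0n dist0; apply: contra ty => /eqP ->; exact: twin_v.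
Qed.

Lemma adj_twin_twin x y : x != y -> twin x -> twin y -> adj x y.
Proof.
move=> nxy tx ty; have := twinP tx y; rewrite eq_sym (negbTE nxy) /= => ->.
by rewrite -(twinP ty y) eqxx.
Qed.

Lemma adj_twin_non x y : x != y -> twin x -> ~~ twin y -> adj x y = (d y == 1).
Proof.
move=> nxy tx ty; have := twinP tx y; rewrite eq_sym (negbTE nxy) /= => ->.
have -> : (y == v) = false by apply/negP => /eqP E; rewrite E twin_v in ty.
by rewrite adj_v_d.
Qed.

Lemma adj_non_non x y : 3 <= alpha adj -> x != y -> ~~ twin x -> ~~ twin y ->
  adj x y = [|| d x == d y, (d x).+1 == d y | (d y).+1 == d x].
Proof.
move=> Hal nxy tx ty.
case: (eqVneq (d x) (d y)) => [E|nE].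
  by rewrite (@all_cliques (d x) x y).
case: (eqVneq (d x).+1 (d y)) => [E|nE1].
  by rewrite (adj_next Hal tx (esym E)).
case: (eqVneq (d y).+1 (d x)) => [E|nE2].
  by rewrite adj_sym (adj_next Hal ty (esym E)).
apply/negbTE/(far_nadj (r:=v)).
move: nE nE1 nE2; move: (d x) (d y) => X Y; lia.
Qed.

End Layers.

Lemma main_result : 3 <= alpha adj ->
  4 <= diam adj /\ exists n : nat, expansion_of adj (@path_rel n).
Proof.
move=> Hal.
have [u _] := stable3 Hal.
have [v Hsimp] := simplicial_exists u Hal.
have [s Hs] := far4 Hsimp Hal.
split.
  rewrite /diam.
  have H1 := @leq_bigmax T (fun y => dist adj v y) s.
  have H2 := @leq_bigmax T (fun x => \max_y dist adj x y) v.
  apply: leq_trans H2; apply: leq_trans H1; by rewrite /= Hs.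
have [w _ Hw] := @arg_maxnP T v xpredT (dist adj v) isT.
move: Hw; set E := dist adj v w => Hw.
have HE : forall y, dist adj v y <= E by move=> y; exact: Hw.
clear Hw.
pose g y := if twin v y then 0 else dist adj v y.
have Hg : forall y, g y < E.+1.
  by move=> y; rewrite /g; case: ifP => _ //; rewrite ltnS HE.
exists E.+1, (fun y => inord (g y)); split.
  move=> k.
  have Hk : (k : nat) <= E by rewrite -ltnS ltn_ord.
  suff [y Hy] : exists y, g y = k.
    by exists y; apply/val_inj; rewrite /= inordK // Hy.
  case: (posnP k) => Hk0.
    by exists v; rewrite /g twin_v Hk0.
  case: (eqVneq (k : nat) 1) => [Hk1|Hk1].
    have [y2 Hy2] := @layer_exists v s 2 (ltac:(by rewrite Hs)).
    have [x1 x1y2 Hx1] := dist_parent (k := 1) (x := v) (y := y2) Hy2.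
    exists x1; rewrite /g Hk1 ifN //.
    apply/negP => /twinP /(_ y2); rewrite x1y2 orbT adj_v_d Hy2 /=.
    by rewrite -dist0 Hy2.
  have [y Hy] := @layer_exists v w k Hk.
  exists y; rewrite /g ifN //.
  apply/negP => /twin_d; rewrite Hy; move: Hk0 Hk1; case: (k : nat) => [|[|n]] //.
move=> x y; rewrite /path_rel -(inj_eq val_inj) /= !inordK //.
case: (eqVneq x y) => [->|nxy]; first by rewrite adj_irr.
rewrite /= /g.
case: (boolP (twin v x)) => tx; case: (boolP (twin v y)) => ty.
- by rewrite (adj_twin_twin nxy tx ty).
- rewrite (adj_twin_non nxy tx ty); move: (dpos ty); case: (dist adj v y) => [|[|n]] //.
- rewrite adj_sym (adj_twin_non _ ty tx); last by rewrite eq_sym.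
  move: (dpos tx); case: (dist adj v x) => [|[|n]] //.
- by rewrite (adj_non_non Hsimp Hal nxy tx ty).
Qed.

End G.

Theorem lemma7 (T : finType) (adj : rel T) :
  simple_graph adj -> connected_graph adj ->
  claw_free adj -> bull_free adj -> longest_induced_cycle_le3 adj ->
  3 <= alpha adj ->
  4 <= diam adj /\ exists n : nat, expansion_of adj (@path_rel n).
Proof.
move=> [Hsym Hirr] Hconn Hcf Hbf Hch Hal.
by apply: main_result.
Qed.
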